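(* The virtual knot invariant $F_K(t,s)$, which takes values in an abelian group, is a (Kauffman) finite-type invariant of degree one. Concretely: <ul> <li>for every virtual knot diagram $K$ with exactly two singular crossings, $$\sum_{\sigma\in\{0,1\}^2}(-1)^{|\sigma|}F_{K_\sigma}(t,s)=0;$$</li> <li>one is the minimal $n$ for which the analogous identity holds for all diagrams with $n+1$ singular crossings.</li> </ul>
   Context: A virtual knot invariant $f$ with values in an abelian group is a finite-type invariant of degree $\le n$ if the following holds. For every oriented virtual knot diagram $K$ with exactly $n+1$ singular crossings (transverse double points, in addition to real and virtual crossings), $$\sum_{\sigma\in\{0,1\}^{n+1}}(-1)^{|\sigma|}f(K_\sigma)=0.$$ Here $|\sigma|$ is the number of ones in $\sigma$, and $K_\sigma$ is obtained by replacing the $i$-th singular crossing with a positive crossing if $\sigma_i=0$ and a negative crossing if $\sigma_i=1$. The degree of $f$ is the minimal such $n$. The Gauss diagram of an oriented virtual knot diagram is built as follows. Take a counterclockwise-oriented circle. For each real crossing, join its two preimages by a chord directed from over- to undercrossing, labeled with the writhe $w(c)=\pm1$. Put $w(K)=\sum_c w(c)$. Let $d$ be a chord intersecting a chord $c$ (endpoints interleave). We say $d$ crosses $c$ from left to right if, viewing $c$ along its direction, the tail of $d$ lies on the left and its head on the right; right to left is the opposite. Let $r_1,\dots,r_n$ be the chords crossing $c$ from left to right and $l_1,\dots,l_m$ those crossing from right to left. Then $\mathrm{Ind}(c)=\sum_i w(r_i)-\sum_j w(l_j)$. Put $N=|\mathrm{Ind}(c)|$ and let $\phi$ be reduction mod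 $N$ into $\{0,\dots,N-1\}$ if $N\ge1$, and the identity if $N=0$. Define $$g_c(s)=\sum_i w(r_i)s^{\phi(\mathrm{Ind}(r_i))}-\sum_j w(l_j)s^{\phi(-\mathrm{Ind}(l_j))}.$$ Call Laurent polynomials $p,q\in\mathbb{Z}[s,s^{-1}]$ equivalent if $p(1)=q(1)$ and $p\equiv q\pmod{s^{|p(1)|}-1}$. Write $t^{[p]}$ for the corresponding basis element of the free abelian group on equivalence classes. Then $$F_K(t,s)=\sum_c w(c)\,t^{[g_c(s)]}-w(K)\,t^{[0]},$$ summing over all real crossings. $F_K(t,s)$ is invariant under generalized Reidemeister moves. *)

(* Defs.v *)
From mathcomp Require Import all_boot all_order all_algebra.
Set Implicit Arguments. Unset Strict Implicit. Unset Printing Implicit Defensive.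
Import Order.TTheory GRing.Theory Num.Theory.
Local Open Scope ring_scope.

(* A monomial (a, e) stands for a * s^e. *)
Definition LP := seq (int * int).

Definition lcoef (p : LP) (e : int) : int := \sum_(m <- p | m.2 == e) m.1.

Definition ev1 (p : LP) : int := \sum_(m <- p) m.1.

(* p ~ q  iff  p(1) = q(1)  and  p - q = (s^N - 1) * h in Z[s,s^-1], N = |p(1)|.
   The coefficient of s^e in (s^N - 1) h is h_(e-N) - h_e. *)
Definition equivLP (p q : LP) : Prop :=
  ev1 p = ev1 q /\
  exists h : LP, forall e : int,
    lcoef p e - lcoef q e = lcoef h (e - `|ev1 p|) - lcoef h e.

(* An element is a formal sum  sum_k a_k t^[p_k], given by a list of (a_k, p_k). *)
Definition FAG := seq (int * LP).

(* fmult x S m : the total coefficient of the class [x] in S is m. *)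
Inductive fmult (x : LP) : FAG -> int -> Prop :=
| fm_nil : fmult x [::] 0
| fm_in (a : int) (p : LP) (S : FAG) (m : int) :
    equivLP p x -> fmult x S m -> fmult x ((a, p) :: S) (a + m)
| fm_out (a : int) (p : LP) (S : FAG) (m : int) :
    ~ equivLP p x -> fmult x S m -> fmult x ((a, p) :: S) m.

Definition fzero (S : FAG) : Prop := forall (x : LP) (m : int), fmult x S m -> m = 0.

Definition fscale (c : int) (S : FAG) : FAG := [seq (c * t.1, t.2) | t <- S].

(* Endpoints are natural-number positions on the circle; increasing position
   means counterclockwise.  A chord goes from its tail (overcrossing) to its
   head (undercrossing); [csign] is true for writhe +1, false for -1. *)
Record chord := Chord { ctail : nat; chead : nat; csign : bool }.

Definition wr (c : chord) : int := if csign c then 1 else -1.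

(* x lies on the open counterclockwise arc from a to b;
   for a chord c = (a -> b) this arc is the right-hand side of c. *)
Definition inarc (a b x : nat) : bool :=
  if (a < b)%N then (a < x)%N && (x < b)%N else (a < x)%N || (x < b)%N.

Definition on_right (c : chord) (x : nat) : bool := inarc (ctail c) (chead c) x.

Definition crossLR (c d : chord) : bool := ~~ on_right c (ctail d) && on_right c (chead d).
Definition crossRL (c d : chord) : bool := on_right c (ctail d) && ~~ on_right c (chead d).

(* A Gauss diagram (all crossings real) is a list of chords. *)
Definition GD := seq chord.

Definition Ind (D : GD) (c : chord) : int :=
  \sum_(d <- D | crossLR c d) wr d - \sum_(d <- D | crossRL c d) wr d.

Definition writhe (D : GD) : int := \sum_(c <- D) wr c.

(* phi: reduction mod N into {0..N-1} if N >= 1, identity if N = 0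
   (mathcomp's modz satisfies (x %% 0)%Z = x). *)
Definition phi (N : int) (x : int) : int := if N == 0 then x else (x %% N)%Z.

Definition g_poly (D : GD) (c : chord) : LP :=
  let N := `|Ind D c| in
  [seq (wr r, phi N (Ind D r)) | r <- D & crossLR c r] ++
  [seq (- wr l, phi N (- Ind D l)) | l <- D & crossRL c l].

Definition F_inv (D : GD) : FAG :=
  [seq (wr c, g_poly D c) | c <- D] ++ [:: (- writhe D, [::] : LP)].

(* Singular chords are directed so that the tail is the overcrossing strand of
   the positive resolution; their [csign] field is ignored. *)
Record SGD := SGauss { real_ch : seq chord; sing_ch : seq chord }.

Definition endpoints (D : SGD) : seq nat :=
  flatten [seq [:: ctail c; chead c] | c <- real_ch D ++ sing_ch D].

Definition valid_SGD (D : SGD) : bool := uniq (endpoints D).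

(* resolution: b = false -> positive crossing, b = true -> negative crossing
   (crossing change reverses the chord and flips the sign). *)
Definition resolve_chord (c : chord) (b : bool) : chord :=
  if b then Chord (chead c) (ctail c) false else Chord (ctail c) (chead c) true.

Definition dchord := Chord 0 0 true.

Definition resolve (D : SGD) (sigma : {ffun 'I_(size (sing_ch D)) -> bool}) : GD :=
  real_ch D ++ [seq resolve_chord (nth dchord (sing_ch D) i) (sigma i)
               | i : 'I_(size (sing_ch D)) <- enum 'I_(size (sing_ch D))].

Arguments resolve : clear implicits.

Definition alt_sum (f : GD -> FAG) (D : SGD) : FAG :=
  flatten [seq fscale ((-1) ^+ #|[pred i | sigma i]|) (f (resolve D sigma))
          | sigma : {ffun 'I_(size (sing_ch D)) -> bool}].

Definition finite_type_le (f : GD -> FAG) (n : nat) : Prop :=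
  forall D : SGD, valid_SGD D -> size (sing_ch D) = n.+1 -> fzero (alt_sum f D).

Definition finite_type_degree (f : GD -> FAG) (n : nat) : Prop :=
  finite_type_le f n /\ forall m : nat, (m < n)%N -> ~ finite_type_le f m.

(* Main.v *)
Require Import Defs.
From mathcomp Require Import all_boot all_order all_algebra.
From mathcomp Require Import zify ring.
From Stdlib Require Import ClassicalEpsilon.
Set Implicit Arguments. Unset Strict Implicit. Unset Printing Implicit Defensive.
Import Order.TTheory GRing.Theory Num.Theory.
Local Open Scope ring_scope.

Definition dec (P : Prop) : int := if excluded_middle_informative P then 1 else 0.
Definition mult (x : LP) (S : FAG) : int := \sum_(t <- S) t.1 * dec (equivLP t.2 x).

Lemma fmult_mult x S m : fmult x S m -> m = mult x S.
Proof.
elim=> [|a p S' m' E _ ->|a p S' m' E _ ->]; rewrite /mult ?big_nil ?big_cons //= /dec;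
  case: excluded_middle_informative => //= _; rewrite ?mulr1 ?mulr0 ?add0r //.
Qed.

Lemma fmult_ex x S : fmult x S (mult x S).
Proof.
elim: S => [|[a p] S IH]; first by rewrite /mult big_nil; exact: fm_nil.
rewrite /mult big_cons /= /dec; case: excluded_middle_informative => H.
  by rewrite mulr1; apply: fm_in.
by rewrite mulr0 add0r; apply: fm_out.
Qed.

Lemma mult_cat x S T : mult x (S ++ T) = mult x S + mult x T.
Proof. by rewrite /mult big_cat. Qed.

Lemma mult_fscale x c S : mult x (fscale c S) = c * mult x S.
Proof.
elim: S => [|t S IH]; first by rewrite /mult !big_nil mulr0.
by rewrite /= /mult !big_cons /= -/(mult x _) IH /= mulrDr mulrA.
Qed.

Lemma mult_flatten (T : Type) x (f : T -> FAG) s :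
  mult x (flatten (map f s)) = \sum_(i <- s) mult x (f i).
Proof.
elim: s => [|i s IH]; first by rewrite big_nil /mult big_nil.
by rewrite /= mult_cat IH big_cons.
Qed.

Definition eqLP (p q : LP) := (forall e, lcoef p e = lcoef q e) /\ ev1 p = ev1 q.

Lemma eqLP_dec p q x : eqLP p q -> dec (equivLP p x) = dec (equivLP q x).
Proof.
move=> [Hl He].
have E : equivLP p x <-> equivLP q x.
  rewrite /equivLP He; split=> [[E1 [h H]]|[E1 [h H]]]; split=> //; exists h => e.
    by rewrite -Hl.
  by rewrite Hl.
rewrite /dec; case: excluded_middle_informative => a; case: excluded_middle_informative => b //; exfalso; tauto.
Qed.

Definition indterm (c d : chord) : int :=
  (if crossLR c d then wr d else 0) - (if crossRL c d then wr d else 0).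

Lemma Ind_nil c : Ind [::] c = 0.
Proof. by rewrite /Ind !big_nil subrr. Qed.

Lemma Ind_cons d D c : Ind (d :: D) c = indterm c d + Ind D c.
Proof.
rewrite /Ind /indterm !big_cons.
case: (crossLR c d); case: (crossRL c d); ring.
Qed.

Lemma Ind_cat p q c : Ind (p ++ q) c = Ind p c + Ind q c.
Proof.
elim: p => [|d p IH] /=; first by rewrite Ind_nil add0r.
by rewrite !Ind_cons IH addrA.
Qed.

Definition fl (e : chord) := Chord (chead e) (ctail e) (~~ csign e).

Lemma wr_fl e : wr (fl e) = - wr e.
Proof. by rewrite /wr /=; case: (csign e). Qed.

Lemma crossLR_fl c e : crossLR c (fl e) = crossRL c e.
Proof. by rewrite /crossLR /crossRL /= andbC. Qed.

Lemma crossRL_fl c e : crossRL c (fl e) = crossLR c e.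
Proof. by rewrite /crossLR /crossRL /= andbC. Qed.

Lemma indterm_fl c e : indterm c (fl e) = indterm c e.
Proof.
rewrite /indterm crossLR_fl crossRL_fl wr_fl.
case: (crossLR c e); case: (crossRL c e); ring.
Qed.

Lemma indterm_self e : indterm e e = 0.
Proof.
rewrite /indterm /crossLR /crossRL /on_right /inarc.
by case: ltnP => H; rewrite !ltnn /= subrr.
Qed.

Lemma on_right_fl e x : ctail e != chead e -> x != ctail e -> x != chead e ->
  on_right (fl e) x = ~~ on_right e x.
Proof.
rewrite /on_right /inarc /= => h1 h2 h3.
case: (ltngtP (ctail e) (chead e)) => H; last by rewrite H eqxx in h1.
- lia.
- lia.
Qed.

Lemma indterm_fl_sep e d : ctail e != chead e ->
  ctail d != ctail e -> ctail d != chead e -> chead d != ctail e -> chead d != chead e ->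
  indterm (fl e) d = - indterm e d.
Proof.
move=> h0 h1 h2 h3 h4.
rewrite /indterm /crossLR /crossRL !on_right_fl //.
case: (on_right e (ctail d)); case: (on_right e (chead d)) => /=; ring.
Qed.

Definition ep (d : chord) : seq nat := [:: ctail d; chead d].
Definition validL (L : GD) := uniq (flatten (map ep L)).

Lemma sum_fl p e : ctail e != chead e ->
  (forall x, x \in flatten (map ep p) -> (x != ctail e) && (x != chead e)) ->
  Ind p (fl e) = - Ind p e.
Proof.
move=> h0; elim: p => [|d p IH] H; first by rewrite !Ind_nil oppr0.
rewrite !Ind_cons IH; last by move=> x hx; apply: H; rewrite /= !inE hx !orbT.
have /andP[h1 h2] := H (ctail d) (mem_head _ _).
have /andP[h3 h4] : (chead d != ctail e) && (chead d != chead e).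
  by apply: H; rewrite /= !inE eqxx orbT.
rewrite (indterm_fl_sep h0 h1 h2 h3 h4); ring.
Qed.

Lemma valid_split p e q : validL (p ++ e :: q) ->
  ctail e != chead e /\
  (forall x, x \in flatten (map ep (p ++ q)) -> (x != ctail e) && (x != chead e)).
Proof.
rewrite /validL !map_cat !flatten_cat /=.
rewrite (uniq_catCA _ [:: ctail e; chead e] _) /=.
move=> HH; have /and3P[H1 h2 _] := HH; move: H1; rewrite inE negb_or => /andP[h0 h1]; split=> // x hx.
by apply/andP; split; apply/negP => /eqP E; [move: h1 | move: h2]; rewrite -E hx.
Qed.

Lemma valid_flip p e q : validL (p ++ e :: q) -> validL (p ++ fl e :: q).
Proof.
rewrite /validL !map_cat !flatten_cat /=.
rewrite (uniq_catCA _ [:: ctail e; chead e] _).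
rewrite (uniq_catCA _ [:: chead e; ctail e] _) /=.
rewrite !inE negb_or !(eq_sym (chead e)).
by case: (ctail e == chead e); case: (ctail e \in _); case: (chead e \in _).
Qed.

Lemma Ind_flip_other p e q c : Ind (p ++ fl e :: q) c = Ind (p ++ e :: q) c.
Proof. by rewrite !Ind_cat !Ind_cons indterm_fl. Qed.

Lemma Ind_flip_self p e q : validL (p ++ e :: q) ->
  Ind (p ++ fl e :: q) (fl e) = - Ind (p ++ e :: q) e.
Proof.
move=> /valid_split [h0 H].
rewrite !Ind_cat !Ind_cons !indterm_self.
rewrite (@sum_fl p e h0); last by move=> x hx; apply: H; rewrite map_cat flatten_cat mem_cat hx.
rewrite (@sum_fl q e h0); last by move=> x hx; apply: H; rewrite map_cat flatten_cat mem_cat hx orbT.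
by rewrite add0r !opprD add0r.
Qed.

Lemma lcoef_nil E : lcoef [::] E = 0.
Proof. by rewrite /lcoef big_nil. Qed.

Lemma lcoef_cons m p E : lcoef (m :: p) E = (if m.2 == E then m.1 else 0) + lcoef p E.
Proof. by rewrite /lcoef big_cons; case: ifP => _; rewrite ?add0r. Qed.

Lemma lcoef_cat p q E : lcoef (p ++ q) E = lcoef p E + lcoef q E.
Proof. by rewrite /lcoef big_cat. Qed.

Lemma lcoef_two (L : seq chord) (P1 P2 : pred chord) (f1 f2 : chord -> int * int) E :
  lcoef ([seq f1 d | d <- L & P1 d] ++ [seq f2 d | d <- L & P2 d]) E =
  \sum_(d <- L) ((if P1 d && ((f1 d).2 == E) then (f1 d).1 else 0) +
                 (if P2 d && ((f2 d).2 == E) then (f2 d).1 else 0)).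
Proof.
elim: L => [|d L IH]; first by rewrite big_nil lcoef_nil.
rewrite big_cons -IH /= !lcoef_cat.
case: (P1 d); case: (P2 d); rewrite /= ?lcoef_cons ?lcoef_cat ?add0r ?addr0 //=;
  case: ((f1 d).2 == E); case: ((f2 d).2 == E); rewrite /= ?add0r ?addr0; ring.
Qed.

Definition gterm (I : chord -> int) (N : int) (c : chord) (E : int) (d : chord) : int :=
  (if crossLR c d && (phi N (I d) == E) then wr d else 0) +
  (if crossRL c d && (phi N (- I d) == E) then - wr d else 0).

Lemma lcoef_g D c E :
  lcoef (g_poly D c) E = \sum_(d <- D) gterm (Ind D) `|Ind D c| c E d.
Proof. by rewrite /g_poly lcoef_two. Qed.

Lemma ev1_g D c : ev1 (g_poly D c) = Ind D c.
Proof.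
rewrite /g_poly /ev1 big_cat !big_map !big_filter /= /Ind sumrN //.
Qed.

Lemma gterm_fl I J N c E e : J (fl e) = - I e ->
  gterm J N c E (fl e) = gterm I N c E e.
Proof.
move=> H; rewrite /gterm crossLR_fl crossRL_fl wr_fl H !opprK; apply: addrC.
Qed.

Lemma gterm_ext I J N c E d : I d = J d -> gterm I N c E d = gterm J N c E d.
Proof. by rewrite /gterm => ->. Qed.

Lemma g_flip p e q c : validL (p ++ e :: q) ->
  eqLP (g_poly (p ++ fl e :: q) c) (g_poly (p ++ e :: q) c).
Proof.
move=> V; split; last by rewrite !ev1_g Ind_flip_other.
move=> E; rewrite !lcoef_g Ind_flip_other !big_cat !big_cons.
rewrite (gterm_fl _ _ _ (Ind_flip_self V)).
congr (_ + (_ + _)); apply: eq_bigr => d _; apply: gterm_ext; exact: Ind_flip_other.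
Qed.

Notation rc := resolve_chord.

Definition eqD (D D' : GD) := forall c, eqLP (g_poly D c) (g_poly D' c).

Lemma eqLP_trans p q s : eqLP p q -> eqLP q s -> eqLP p s.
Proof. by move=> [h1 h2] [h3 h4]; split=> [e|]; rewrite ?h1 ?h2. Qed.

Lemma eqLP_refl p : eqLP p p.
Proof. by []. Qed.

Section Main.
Variables (r : GD) (c1 c2 : chord).

Definition Dd b0 b1 := r ++ [:: rc c1 b0; rc c2 b1].

Lemma Dd_split1 b0 b1 : Dd b0 b1 = r ++ rc c1 b0 :: [:: rc c2 b1].
Proof. by []. Qed.

Lemma Dd_split2 b0 b1 : Dd b0 b1 = (r ++ [:: rc c1 b0]) ++ rc c2 b1 :: [::].
Proof. by rewrite /Dd -catA. Qed.

Lemma fl_rc c : rc c true = fl (rc c false).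
Proof. by []. Qed.

Hypothesis V : validL (Dd false false).

Lemma validDd b0 b1 : validL (Dd b0 b1).
Proof.
have V1 : validL (Dd false b1).
  case: b1 => //; rewrite Dd_split2 fl_rc; apply: valid_flip; by rewrite -Dd_split2.
case: b0 => //; rewrite Dd_split1 fl_rc; apply: valid_flip; by rewrite -Dd_split1.
Qed.

Lemma eqD_b0 b0 b1 : eqD (Dd b0 b1) (Dd false b1).
Proof.
case: b0 => c; last exact: eqLP_refl.
rewrite (Dd_split1 true) (Dd_split1 false) fl_rc; apply: g_flip; rewrite -Dd_split1; exact: validDd.
Qed.

Lemma eqD_b1 b0 b1 : eqD (Dd b0 b1) (Dd b0 false).
Proof.
case: b1 => c; last exact: eqLP_refl.
rewrite (Dd_split2 b0 true) (Dd_split2 b0 false) fl_rc; apply: g_flip; rewrite -Dd_split2; exact: validDd.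
Qed.

Variable x : LP.

Definition dg D c := dec (equivLP (g_poly D c) x).

Lemma mult_F D : mult x (F_inv D) =
  \sum_(c <- D) wr c * dg D c + (- writhe D) * dec (equivLP [::] x).
Proof. by rewrite /F_inv mult_cat /mult big_map big_cons big_nil addr0. Qed.

Definition d0 := dec (equivLP [::] x).
Definition C0 := \sum_(c <- r) wr c * dg (Dd false false) c - writhe r * d0.
Definition al b := wr (rc c1 b) * dg (Dd b false) (rc c1 b) - wr (rc c1 b) * d0.
Definition be b := wr (rc c2 b) * dg (Dd false b) (rc c2 b) - wr (rc c2 b) * d0.

Lemma M_decomp b0 b1 : mult x (F_inv (Dd b0 b1)) = C0 + al b0 + be b1.
Proof.
rewrite mult_F /C0 /al /be.
have key : forall G : chord -> int,
  \sum_(c <- Dd b0 b1) G c = \sum_(c <- r) G c + G (rc c1 b0) + G (rc c2 b1).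
  by move=> G; rewrite /Dd big_cat /= !big_cons big_nil /= addr0 addrA.
rewrite key /writhe key.
have -> : \sum_(c <- r) wr c * dg (Dd b0 b1) c = \sum_(c <- r) wr c * dg (Dd false false) c.
  apply: eq_bigr => c _; congr (_ * _); apply: eqLP_dec.
  apply: eqLP_trans (eqD_b0 b0 b1 c) _; exact: eqD_b1.
have -> : dg (Dd b0 b1) (rc c1 b0) = dg (Dd b0 false) (rc c1 b0).
  by apply: eqLP_dec; apply: eqD_b1.
have -> : dg (Dd b0 b1) (rc c2 b1) = dg (Dd false b1) (rc c2 b1).
  by apply: eqLP_dec; apply: eqD_b0.
rewrite -/d0.
ring.
Qed.
End Main.

Lemma enum2 : enum 'I_2 = [:: ord0; ord_max].
Proof. by apply: (inj_map val_inj); rewrite val_enum_ord. Qed.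

Lemma resolve2 r c1 c2 (s : {ffun 'I_2 -> bool}) :
  resolve (SGauss r [:: c1; c2]) s = Dd r c1 c2 (s ord0) (s ord_max).
Proof. by rewrite /resolve /= enum2. Qed.

Definition mk2 (p : bool * bool) : {ffun 'I_2 -> bool} :=
  [ffun i : 'I_2 => if i == ord0 then p.1 else p.2].

Lemma mk2_bij : bijective mk2.
Proof.
exists (fun s : {ffun 'I_2 -> bool} => (s ord0, s ord_max)).
  by case=> a b; rewrite /mk2 !ffunE.
move=> s; apply/ffunP => i; rewrite /mk2 ffunE /=.
case: eqP => [->//|]; case: i => [[|[|n]] Hi] //= H.
  by exfalso; apply: H; apply: val_inj.
by congr (s _); apply: val_inj.
Qed.

Lemma card_mk2 a b : #|[pred i | mk2 (a, b) i]| = (a + b)%N.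
Proof.
rewrite -sum1_card big_mkcond /= big_ord_recr big_ord1 /= !inE /mk2 !ffunE /=.
by case: a; case: b.
Qed.

Lemma alt_mult r c1 c2 x : mult x (alt_sum F_inv (SGauss r [:: c1; c2])) =
  \sum_(a : bool) \sum_(b : bool) (-1) ^+ (a + b)%N * mult x (F_inv (Dd r c1 c2 a b)).
Proof.
rewrite /alt_sum /image_mem mult_flatten big_enum /=.
rewrite pair_big /= (reindex mk2) /=; last exact: onW_bij _ mk2_bij.
apply: eq_big => [p|[a b] _] //.
rewrite mult_fscale resolve2 card_mk2 /mk2 !ffunE /=.
by [].
Qed.

Lemma enum1 : enum 'I_1 = [:: ord0].
Proof. by apply: (inj_map val_inj); rewrite val_enum_ord. Qed.

Definition mk1 (b : bool) : {ffun 'I_1 -> bool} := [ffun _ => b].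

Lemma mk1_bij : bijective mk1.
Proof.
exists (fun s : {ffun 'I_1 -> bool} => s ord0); first by move=> b; rewrite /mk1 ffunE.
by move=> s; apply/ffunP => i; rewrite /mk1 ffunE (ord1 i).
Qed.

Lemma card_mk1 a : #|[pred i | mk1 a i]| = nat_of_bool a.
Proof. by rewrite -sum1_card big_mkcond /= big_ord1 /= !inE /mk1 !ffunE /=; case: a. Qed.

Lemma alt_mult1 r c x : mult x (alt_sum F_inv (SGauss r [:: c])) =
  \sum_(a : bool) (-1) ^+ (nat_of_bool a) * mult x (F_inv (r ++ [:: rc c a])).
Proof.
rewrite /alt_sum /image_mem mult_flatten big_enum /=.
rewrite (reindex mk1) /=; last exact: onW_bij _ mk1_bij.
apply: eq_big => [p|a _] //.
by rewrite mult_fscale card_mk1 /resolve /= enum1 /= /mk1 ffunE.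
Qed.

Lemma dec_ev1 p x : ev1 p != ev1 x -> dec (equivLP p x) = 0.
Proof.
move=> H; rewrite /dec; destruct (excluded_middle_informative _) as [HE|]; last by [].
exfalso; move: H; case: HE => E _; by rewrite E eqxx.
Qed.

Lemma dec_nil : dec (equivLP [::] [::]) = 1.
Proof.
rewrite /dec; destruct (excluded_middle_informative _) as [|H]; first by [].
exfalso; apply: H.
split=> //; exists [::]; move=> e; by rewrite /lcoef !big_nil.
Qed.

Theorem proposition5p5 : finite_type_degree F_inv 1.
Proof.
split.
- move=> [r [|c1 [|c2 [|c3 s]]]] Vd //= _ x m /fmult_mult ->.
  rewrite alt_mult.
  have V : validL (Dd r c1 c2 false false).
    by move: Vd; rewrite /validL /valid_SGD /endpoints /Dd /= !map_cat.
  under eq_bigr do under eq_bigr do rewrite (M_decomp V).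
  rewrite !big_bool /=.
  ring.
- move=> m; rewrite ltnS leqn0 => /eqP -> H.
  pose D := SGauss [:: Chord 1 3 true] [:: Chord 0 2 true].
  have := H D erefl erefl _ _ (fmult_ex [::] _).
  rewrite alt_mult1 big_bool /= !mult_F /= !big_cons big_nil /=.
  have E : forall D c, Ind D c != 0 -> dg [::] D c = 0.
    by move=> D' c h; apply: dec_ev1; rewrite ev1_g /ev1 big_nil.
  rewrite !E ?dec_nil ?big_nil /writhe ?big_cons ?big_nil /=;
    try by rewrite !Ind_cons Ind_nil /indterm /=.
  by rewrite /wr /= expr1 expr0; move/eqP.
Qed.
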